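(* Consider optimal control problem OCP-2 (described in the context). The optimal control $u_*^2$ (given pointwise by maximization of the Hamiltonian along the optimal trajectory and adjoint function) is a continuous function on the interval $[0,T]$.
   Context: Parameters: $\beta_1,\beta_2,\gamma,\rho_1,\rho_2>0$; $\sigma_1,\sigma_2>0$ with $\sigma_1+\sigma_2=1$; $q\in[0,1]$; $0\le u_{\max}<1$; weights $\alpha_1,\alpha_2\ge0$, $\alpha_3>0$; horizon $T>0$; initial values $s_0,e_0,i_0,j_0>0$ with $s_0+e_0+i_0+j_0\le1$. Admissible controls: Lebesgue measurable $u:[0,T]\to[0,u_{\max}]$. State system: $s'=-sn^{-1}(\beta_1(1-u)i+\beta_2j)$, $e'=sn^{-1}(\beta_1(1-u)i+\beta_2j)-\gamma e$, $i'=\sigma_1\gamma e-\rho_1 i$, $j'=\sigma_2\gamma e-\rho_2 j$, $n'=-q\rho_2 j$, with $s(0)=s_0,e(0)=e_0,i(0)=i_0,j(0)=j_0,n(0)=1$. OCP-2 is the problem of minimizing $Q(u)=\alpha_1(e(T)+i(T)+j(T))+\alpha_2\int_0^T(e+i+j)\,dt+0.5\alpha_3\int_0^Tu^2\,dt$ over admissible controls. Hamiltonian: $H(s,e,i,j,n,\phi_1,\dots,\phi_5,u)=-sn^{-1}(\beta_1(1-u)i+\beta_2j)(\phi_1-\phi_2)-\gamma e(\phi_2-\sigma_1\phi_3-\sigma_2\phi_4)-\rho_1 i\phi_3-\rho_2 j(\phi_4+q\phi_5)-\alpha_2(e+i+j)-0.5\alpha_3u^2$. For an optimal control $u_*^2$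 with optimal trajectory $(s_*^2,e_*^2,i_*^2,j_*^2,n_*^2)$, the adjoint function $\phi_*=(\phi_1^*,\dots,\phi_5^* )$ of the Pontryagin maximum principle is a nontrivial solution of (with $s,i,j,n,u$ denoting the optimal ones) $\phi_1'=n^{-1}(\beta_1(1-u)i+\beta_2j)(\phi_1-\phi_2)$, $\phi_2'=\gamma(\phi_2-\sigma_1\phi_3-\sigma_2\phi_4)+\alpha_2$, $\phi_3'=\beta_1(1-u)sn^{-1}(\phi_1-\phi_2)+\rho_1\phi_3+\alpha_2$, $\phi_4'=\beta_2sn^{-1}(\phi_1-\phi_2)+\rho_2(\phi_4+q\phi_5)+\alpha_2$, $\phi_5'=-sn^{-2}(\beta_1(1-u)i+\beta_2j)(\phi_1-\phi_2)$, with $\phi_1(T)=0$, $\phi_2(T)=\phi_3(T)=\phi_4(T)=-\alpha_1$, $\phi_5(T)=0$, and $u_*^2(t)$ maximizes $H(s_*^2(t),e_*^2(t),i_*^2(t),j_*^2(t),n_*^2(t),\phi_*(t),u)$ over $u\in[0,u_{\max}]$. *)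

(* Defs.v *)
From HB Require Import structures.
From mathcomp Require Import all_boot all_order all_algebra.
From mathcomp Require Import all_classical all_reals all_analysis.
Import Order.TTheory GRing.Theory Num.Theory.
Set Implicit Arguments.
Unset Strict Implicit.
Unset Printing Implicit Defensive.
Local Open Scope classical_set_scope.
Local Open Scope ring_scope.

(** The real line equipped with the Lebesgue (completed) sigma-algebra. *)
Definition LebType (R : realType) := caratheodory_type ((wlength (R:=R) idfun)^*)%mu.

Definition leb_measurable_fun {R : realType} (D : set R) (u : R -> R) : Prop :=
  @measurable_fun _ _ (LebType R) R D u.

Definition leb_integrable {R : realType} (D : set R) (f : R -> R) : Prop :=
  (@completed_lebesgue_measure R).-integrable (D : set (LebType R)) (EFin \o f).
Definition leb_int {R : realType} (D : set R) (f : R -> R) : R :=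
  @Rintegral _ (LebType R) R completed_lebesgue_measure D f.

Record ocp_params (R : realType) := OcpParams {
  beta1 : R; beta2 : R; gamma : R; rho1 : R; rho2 : R;
  sigma1 : R; sigma2 : R; qq : R; umax : R;
  alpha1 : R; alpha2 : R; alpha3 : R; TT : R;
  s0 : R; e0 : R; i0 : R; j0 : R }.

Definition ocp_params_ok {R : realType} (P : ocp_params R) : Prop :=
  [/\ 0 < beta1 P, 0 < beta2 P, 0 < gamma P, 0 < rho1 P & 0 < rho2 P] /\
  [/\ 0 < sigma1 P, 0 < sigma2 P, sigma1 P + sigma2 P = 1,
      0 <= qq P <= 1 & 0 <= umax P < 1] /\
  [/\ 0 <= alpha1 P, 0 <= alpha2 P, 0 < alpha3 P & 0 < TT P] /\
  [/\ 0 < s0 P, 0 < e0 P, 0 < i0 P, 0 < j0 P &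
      s0 P + e0 P + i0 P + j0 P <= 1].

Definition admissible {R : realType} (P : ocp_params R) (u : R -> R) : Prop :=
  leb_measurable_fun `[0, TT P] u /\
  forall t, 0 <= t <= TT P -> 0 <= u t <= umax P.

Definition infl {R : realType} (P : ocp_params R) (u s i j n : R) : R :=
  s / n * (beta1 P * (1 - u) * i + beta2 P * j).

(** (s,e,i,j,n) is a (Caratheodory, i.e. absolutely continuous, integral-form)
    solution of the state system on [0,T] for control u. *)
Definition is_trajectory {R : realType} (P : ocp_params R) (u s e i j n : R -> R) : Prop :=
  let fs := fun r => - infl P (u r) (s r) (i r) (j r) (n r) in
  let fe := fun r => infl P (u r) (s r) (i r) (j r) (n r) - gamma P * e r in
  let fi := fun r => sigma1 P * gamma P * e r - rho1 P * i r in
  let fj := fun r => sigma2 P * gamma P * e r - rho2 P * j r in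
  let fn := fun r => - (qq P * rho2 P * j r) in
  [/\ leb_integrable `[0, TT P] fs, leb_integrable `[0, TT P] fe,
      leb_integrable `[0, TT P] fi, leb_integrable `[0, TT P] fj &
      leb_integrable `[0, TT P] fn] /\
  forall t, 0 <= t <= TT P ->
    [/\ s t = s0 P + leb_int `[0, t] fs, e t = e0 P + leb_int `[0, t] fe,
        i t = i0 P + leb_int `[0, t] fi, j t = j0 P + leb_int `[0, t] fj &
        n t = 1 + leb_int `[0, t] fn].

Definition cost {R : realType} (P : ocp_params R) (u e i j : R -> R) : R :=
  alpha1 P * (e (TT P) + i (TT P) + j (TT P))
  + alpha2 P * leb_int `[0, TT P] (fun r => e r + i r + j r)
  + 2^-1 * alpha3 P * leb_int `[0, TT P] (fun r => u r ^+ 2).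

Definition optimal_ocp2 {R : realType} (P : ocp_params R) (u s e i j n : R -> R) : Prop :=
  admissible P u /\ is_trajectory P u s e i j n /\
  forall v s' e' i' j' n', admissible P v -> is_trajectory P v s' e' i' j' n' ->
    cost P u e i j <= cost P v e' i' j'.

Definition hamiltonian {R : realType} (P : ocp_params R)
    (s e i j n p1 p2 p3 p4 p5 u : R) : R :=
  - infl P u s i j n * (p1 - p2)
  - gamma P * e * (p2 - sigma1 P * p3 - sigma2 P * p4)
  - rho1 P * i * p3 - rho2 P * j * (p4 + qq P * p5)
  - alpha2 P * (e + i + j) - 2^-1 * alpha3 P * u ^+ 2.

Definition is_adjoint {R : realType} (P : ocp_params R) (u s i j n p1 p2 p3 p4 p5 : R -> R) : Prop :=
  let g1 := fun r => (beta1 P * (1 - u r) * i r + beta2 P * j r) / n r * (p1 r - p2 r) in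
  let g2 := fun r => gamma P * (p2 r - sigma1 P * p3 r - sigma2 P * p4 r) + alpha2 P in
  let g3 := fun r => beta1 P * (1 - u r) * s r / n r * (p1 r - p2 r) + rho1 P * p3 r + alpha2 P in
  let g4 := fun r => beta2 P * s r / n r * (p1 r - p2 r) + rho2 P * (p4 r + qq P * p5 r) + alpha2 P in
  let g5 := fun r => - (s r / (n r ^+ 2) * (beta1 P * (1 - u r) * i r + beta2 P * j r) * (p1 r - p2 r)) in
  [/\ leb_integrable `[0, TT P] g1, leb_integrable `[0, TT P] g2,
      leb_integrable `[0, TT P] g3, leb_integrable `[0, TT P] g4 &
      leb_integrable `[0, TT P] g5] /\
  forall t, 0 <= t <= TT P ->
    [/\ p1 t = 0 - leb_int `[t, TT P] g1,
        p2 t = - alpha1 P - leb_int `[t, TT P] g2,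
        p3 t = - alpha1 P - leb_int `[t, TT P] g3,
        p4 t = - alpha1 P - leb_int `[t, TT P] g4 &
        p5 t = 0 - leb_int `[t, TT P] g5].

Definition nontrivial_adjoint {R : realType} (P : ocp_params R) (p1 p2 p3 p4 p5 : R -> R) : Prop :=
  exists t, 0 <= t <= TT P /\
    (p1 t != 0 \/ p2 t != 0 \/ p3 t != 0 \/ p4 t != 0 \/ p5 t != 0).

(* Main.v *)
Require Import Defs.
From HB Require Import structures.
From mathcomp Require Import all_boot all_order all_algebra.
From mathcomp Require Import all_classical all_reals all_analysis.
From mathcomp Require Import ring lra.
Import Order.TTheory GRing.Theory Num.Theory.
Import numFieldNormedType.Exports.
Local Open Scope classical_set_scope.
Local Open Scope ring_scope.

Set Implicit Arguments.
Unset Strict Implicit.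

Section H.
Variable R : realType.
Notation mu := (@completed_lebesgue_measure R).
Notation L := (LebType R).

Lemma within_epsP (f : R -> R) (A : set R) :
  (forall x, A x -> forall e : R, 0 < e -> exists2 d : R, 0 < d &
     forall y, A y -> `|x - y| < d -> `|f x - f y| < e) ->
  {within A, continuous f}.
Proof.
move=> H; rewrite continuous_subspace_in => x; rewrite inE => Ax.
rewrite /continuous_at /prop_for.
have [_|//] := nbhs_subspaceP A x. move: H.
move=> H. apply/(@cvgrPdist_lt _ R^o _ _ (within_filter _ _)) => e e0.
have [d d0 Hd] := H x Ax e e0.
rewrite /within /=. apply/nbhs_ballP. exists d => //= y. rewrite /ball /=. move=> xy Ay. exact: Hd.
Qed.

Lemma within_epsE (f : R -> R) (A : set R) :
  {within A, continuous f} ->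
  (forall x, A x -> forall e : R, 0 < e -> exists2 d : R, 0 < d &
     forall y, A y -> `|x - y| < d -> `|f x - f y| < e).
Proof.
rewrite continuous_subspace_in => H x Ax e e0.
have := H x; rewrite inE => /(_ Ax).
rewrite /continuous_at /prop_for.
have [_|//] := nbhs_subspaceP A x.
move/cvgrPdist_lt => /(_ e e0).
rewrite /within /= => /nbhs_ballP [d d0 Hd].
exists d => // y Ay xy. exact: Hd.
Qed.


Lemma mitv (i : interval R) : measurable ([set` i] : set L).
Proof. apply: sub_caratheodory. exact: (@measurable_itv R i). Qed.

Lemma mu_itv (i : interval R) : mu ([set` i] : set L) =
  (if i.1 < i.2 then (i.2 : \bar R) - i.1 else 0)%E.
Proof. rewrite -lebesgue_measure_itv. reflexivity. Qed.

Lemma int_setU (f : R -> R) (A B : set R) :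
  measurable (A : set L) -> measurable (B : set L) ->
  leb_integrable (A `|` B) f -> [disjoint A & B] ->
  leb_int (A `|` B) f = leb_int A f + leb_int B f.
Proof. move=> mA mB intf dAB. exact: (@Rintegral_setU _ L R mu A B f). Qed.

Lemma int_sub (f : R -> R) (A B : set R) :
  measurable (A : set L) -> measurable (B : set L) -> B `<=` A ->
  leb_integrable A f -> leb_integrable B f.
Proof. move=> mA mB BA intf. exact: (@integrableS _ L R mu A B _ mA mB BA intf). Qed.

Lemma int_small (f : R -> R) (T0 : R) : leb_integrable `[0, T0] f ->
  forall e : R, 0 < e -> exists2 d : R, 0 < d &
   forall D : set R, measurable (D : set L) -> D `<=` `[0, T0] ->
     (mu D < d%:E)%E -> `|leb_int D f| < e.
Proof.
move=> intf e e0.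
pose g := f \_ `[0, T0].
have intg : mu.-integrable (setT : set L) (EFin \o g).
  rewrite /g -restrict_EFin; apply/(@integrable_restrict _ L R mu) => //=.
    exact: (mitv `[0, T0]).
  by rewrite setTI.
have [d [d0 Hd]] := @integral_normr_continuous _ L R mu g intg e e0.
exists d => // D mD DT muD.
have intD : leb_integrable D f := @int_sub f _ _ (mitv `[0, T0]) mD DT intf.
apply: le_lt_trans (Hd D mD muD).
apply: le_trans (@le_normr_Rintegral _ L R mu D f mD intD) _.
rewrite le_eqVlt; apply/orP; left; apply/eqP.
apply: (@eq_Rintegral _ L R mu) => z; rewrite inE => Dz.
by rewrite /g patchE ifT // inE; apply: DT.
Qed.


Lemma int_incr (f : R -> R) (T0 x y : R) : leb_integrable `[0, T0] f ->
  0 <= x -> x <= y -> y <= T0 ->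
  leb_int `[0, y] f = leb_int `[0, x] f + leb_int `]x, y] f.
Proof.
move=> intf x0 xy yT.
have E : `[0, y]%classic = `[0, x]%classic `|` `]x, y]%classic :> set R.
  by apply: itv_bndbnd_setU; rewrite bnd_simp.
rewrite E; apply: int_setU; [exact: mitv|exact: mitv| |].
  rewrite -E; apply: (@int_sub f `[0, T0]); [exact: mitv|exact: mitv| |exact: intf].
  by apply: subset_itv; rewrite bnd_simp.
apply/disj_set2P; rewrite -subset0 => z /=; rewrite !in_itv /= => -[/andP[_ a] /andP[b _]].
by move: (lt_le_trans b a); rewrite ltxx.
Qed.

Lemma int_decr (f : R -> R) (T0 x y : R) : leb_integrable `[0, T0] f ->
  0 <= x -> x <= y -> y <= T0 ->
  leb_int `[x, T0] f = leb_int `[x, y[ f + leb_int `[y, T0] f.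
Proof.
move=> intf x0 xy yT.
have E : `[x, T0]%classic = `[x, y[%classic `|` `[y, T0]%classic :> set R.
  by apply: itv_bndbnd_setU; rewrite bnd_simp.
rewrite E; apply: int_setU; [exact: mitv|exact: mitv| |].
  rewrite -E; apply: (@int_sub f `[0, T0]); [exact: mitv|exact: mitv| |exact: intf].
  by apply: subset_itv; rewrite bnd_simp.
apply/disj_set2P; rewrite -subset0 => z /=; rewrite !in_itv /= => -[/andP[_ a] /andP[b _]].
by move: (lt_le_trans a b); rewrite ltxx.
Qed.

Lemma prim_cont (f : R -> R) (T0 : R) : leb_integrable `[0, T0] f ->
  {within `[0, T0], continuous (fun t => leb_int `[0, t] f)}.
Proof.
move=> intf; apply: within_epsP => x; rewrite /= in_itv /= => /andP[x0 xT] e e0.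
have [d d0 Hd] := @int_small f T0 intf e e0.
exists d => // y; rewrite /= in_itv /= => /andP[y0 yT] xyd.
have key : forall a b : R, 0 <= a -> a <= b -> b <= T0 -> b - a < d ->
   `|leb_int `[0, a] f - leb_int `[0, b] f| < e.
  move=> a b a0 ab bT bad.
  rewrite (int_incr intf a0 ab bT) opprD addrA subrr add0r normrN.
  apply: Hd; first exact: mitv.
    by apply: subset_itv; rewrite bnd_simp.
  by rewrite mu_itv /=; case: ifP => _; rewrite ?EFinB lte_fin.
have [xy|yx] := leP x y.
  apply: key => //. by rewrite -normrN opprB ger0_norm ?subr_ge0 in xyd.
rewrite distrC; apply: key => //; first exact: ltW.
by rewrite ger0_norm ?subr_ge0 ?ltW in xyd.
Qed.

Lemma prim_cont_back (f : R -> R) (T0 : R) : leb_integrable `[0, T0] f ->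
  {within `[0, T0], continuous (fun t => leb_int `[t, T0] f)}.
Proof.
move=> intf; apply: within_epsP => x; rewrite /= in_itv /= => /andP[x0 xT] e e0.
have [d d0 Hd] := @int_small f T0 intf e e0.
exists d => // y; rewrite /= in_itv /= => /andP[y0 yT] xyd.
have key : forall a b : R, 0 <= a -> a <= b -> b <= T0 -> b - a < d ->
   `|leb_int `[a, T0] f - leb_int `[b, T0] f| < e.
  move=> a b a0 ab bT bad.
  rewrite (int_decr intf a0 ab bT) addrK.
  apply: Hd; first exact: mitv.
    by apply: subset_itv; rewrite bnd_simp.
  by rewrite mu_itv /=; case: ifP => _; rewrite ?EFinB lte_fin.
have [xy|yx] := leP x y.
  apply: key => //. by rewrite -normrN opprB ger0_norm ?subr_ge0 in xyd.
rewrite distrC; apply: key => //; first exact: ltW.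
by rewrite ger0_norm ?subr_ge0 ?ltW in xyd.
Qed.


Lemma lintgB (D : set R) (f g : R -> R) : measurable (D : set L) ->
  leb_integrable D f -> leb_integrable D g -> leb_integrable D (fun x => f x - g x).
Proof. move=> mD hf hg. exact: (@integrableB _ L R mu D mD _ _ hf hg). Qed.

Lemma lintB (D : set R) (f g : R -> R) : measurable (D : set L) ->
  leb_integrable D f -> leb_integrable D g ->
  leb_int D (fun x => f x - g x) = leb_int D f - leb_int D g.
Proof. move=> mD hf hg. exact: (@RintegralB _ L R mu D f g mD hf hg). Qed.

Lemma lint_ge0 (D : set R) (f : R -> R) : (forall x, D x -> 0 <= f x) -> 0 <= leb_int D f.
Proof. move=> h. exact: (@Rintegral_ge0 _ L R mu D f h). Qed.

Lemma mu_oc (a b : R) : a <= b -> fine (mu `]a, b]%classic) = b - a.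
Proof.
move=> ab; rewrite mu_itv /=; case: ifPn => h /=; first by [].
move: h; rewrite lte_fin -leNgt => h; have -> : a = b by apply/eqP; rewrite eq_le ab h.
by rewrite subrr.
Qed.

Lemma int_cst_oc (a b c : R) : a <= b -> leb_integrable `]a, b] (fun _ => c).
Proof.
move=> ab; apply/integrableP; split; first exact: measurable_cst.
rewrite (@integral_cst _ L R mu); last exact: mitv.
rewrite [X in (_ * X < _)%E](_ : _ = (if a < b then (b%:E - a%:E)%E else 0%E)); last exact: (mu_itv `]a, b]).
case: ifPn => _ /=; first by rewrite -EFinB -EFinM ltry.
by rewrite mule0 ltry.
Qed.

Lemma lint_lb (a b m : R) (f : R -> R) : a <= b ->
  leb_integrable `]a, b] f -> (forall x, a < x <= b -> m <= f x) ->
  m * (b - a) <= leb_int `]a, b] f.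
Proof.
move=> ab hf hm; rewrite -(mu_oc ab).
rewrite /leb_int -(@Rintegral_cst _ L R mu); last exact: mitv.
apply: (@le_Rintegral _ L R mu); [exact: mitv|exact: int_cst_oc|exact: hf|].
by move=> x; rewrite /= in_itv /=; apply: hm.
Qed.

Lemma int_pt (f : R -> R) (T0 : R) : leb_integrable `[0, T0] f -> 0 <= T0 ->
  leb_int `[0, 0] f = 0.
Proof.
move=> hf T0p; apply/eqP; rewrite -normr_le0; rewrite leNgt; apply/negP => h.
have [d d0 Hd] := int_small hf h.
have := Hd `[0, 0]%classic (mitv _).
have /[swap] /[apply] : `[0, 0]%classic `<=` `[0, T0]%classic.
  by apply: subset_itv; rewrite bnd_simp.
rewrite mu_itv /= ltxx lte_fin => /(_ d0).
by rewrite ltxx.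
Qed.

Lemma cont_of_int (x : R -> R) (x0 T0 : R) (h : R -> R) :
  leb_integrable `[0, T0] h ->
  (forall t, 0 <= t <= T0 -> x t = x0 + leb_int `[0, t] h) ->
  {within `[0, T0], continuous x}.
Proof.
move=> hi hx; have := within_epsE (prim_cont hi) => H.
apply: within_epsP => a Aa e e0.
have [d d0 Hd] := H a Aa e e0.
exists d => // b Ab ab.
move: Aa Ab; rewrite /= !in_itv /= => Aa Ab.
rewrite (hx a Aa) (hx b Ab) opprD addrACA subrr add0r.
by apply: Hd => //; rewrite /= in_itv /= Ab.
Qed.

Lemma cont_of_int_back (x : R -> R) (x0 T0 : R) (h : R -> R) :
  leb_integrable `[0, T0] h ->
  (forall t, 0 <= t <= T0 -> x t = x0 - leb_int `[t, T0] h) ->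
  {within `[0, T0], continuous x}.
Proof.
move=> hi hx; have := within_epsE (prim_cont_back hi) => H.
apply: within_epsP => a Aa e e0.
have [d d0 Hd] := H a Aa e e0.
exists d => // b Ab ab.
move: Aa Ab; rewrite /= !in_itv /= => Aa Ab.
rewrite (hx a Aa) (hx b Ab) -normrN.
set A := leb_int _ h; set B := leb_int _ h.
have -> : - (x0 - A - (x0 - B)) = A - B by ring.

by apply: Hd => //; rewrite /= in_itv /= Ab.
Qed.

Lemma incr_bound (x : R -> R) (x0 T0 a b m : R) (h : R -> R) :
  leb_integrable `[0, T0] h ->
  (forall t, 0 <= t <= T0 -> x t = x0 + leb_int `[0, t] h) ->
  0 <= a -> a <= b -> b <= T0 -> (forall r, a < r <= b -> m <= h r) ->
  x a + m * (b - a) <= x b.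
Proof.
move=> hi hx a0 ab bT hm.
have aT : a <= T0 by exact: le_trans ab bT.
have b0 : 0 <= b by exact: le_trans a0 ab.
rewrite (hx a) ?a0 ?aT // (hx b) ?b0 ?bT // (int_incr hi a0 ab bT).
rewrite -addrA lerD2l lerD2l.
apply: lint_lb => //.
apply: (@int_sub h `[0, T0]); [exact: mitv|exact: mitv| |exact: hi].
by apply: subset_itv; rewrite bnd_simp.
Qed.

End H.

Section G.
Variable R : realType.

Lemma first_zero (g : R -> R) (T0 : R) : {within `[0, T0], continuous g} ->
  0 < g 0 -> (exists z, 0 <= z <= T0 /\ g z <= 0) ->
  exists c, [/\ 0 < c, c <= T0, g c = 0 & forall t, 0 <= t < c -> 0 < g t].
Proof.
move=> /within_epsE gc g0 [z [/andP[z0 zT] gz]].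
pose S := [set t : R | (0 <= t <= T0) /\ g t <= 0].
have Sz : S z by split => //; rewrite z0.
have lbS : has_lbound S by exists 0 => t [/andP[t0 _] _].
have hiS : has_inf S by split => //; exists z.
set c := inf S.
have cz : c <= z by exact: (ge_inf lbS Sz).
have c0 : 0 <= c by apply: lb_le_inf; [exists z | move=> t [/andP[t0 _] _]].
have cT : c <= T0 by exact: le_trans cz zT.
have cin : `[0, T0]%classic c by rewrite /= in_itv /= c0 cT.
have pos : forall t, 0 <= t < c -> 0 < g t.
  move=> t /andP[t0 tc]; rewrite ltNge; apply/negP => gt.
  have St : S t by split => //; rewrite t0 /= (le_trans (ltW tc) cT).
  by move: (ge_inf lbS St); rewrite leNgt tc.
have gcle : g c <= 0.
  rewrite leNgt; apply/negP => gcp.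
  have [d d0 Hd] := gc c cin (g c) gcp.
  have [y Sy yc] := inf_adherent d0 hiS.
  have cy : c <= y by exact: (ge_inf lbS Sy).
  case: Sy => /andP[y0 yT] gy.
  have := Hd y; rewrite /= in_itv /= y0 yT => /(_ isT).
  have -> : `|c - y| = y - c by rewrite distrC ger0_norm // subr_ge0.
  move=> /(_ ltac:(lra)).
  rewrite ltr_norml => /andP[h1 h2]; lra.
have cpos : 0 < c.
  rewrite lt_neqAle c0 andbT; apply/eqP => c0'.
  by move: gcle; rewrite -c0' leNgt g0.
exists c; split => //.
apply/eqP; rewrite eq_le gcle /=; rewrite leNgt; apply/negP => gcn.
have [d d0 Hd] := gc c cin (- g c) ltac:(lra).
have [t [t0 tc ct]] : exists t, [/\ 0 <= t, t < c & c - t < d].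
  case: (ltP (d / 2) c) => h.
    by exists (c - d / 2); split; lra.
  by exists 0; split; lra.
have := Hd t; rewrite /= in_itv /= t0 (le_trans (ltW tc) cT) => /(_ isT).
rewrite ger0_norm ?subr_ge0 ?(ltW tc) // => /(_ ct).
have := pos t; rewrite t0 tc => /(_ isT) gtp.
rewrite ltr_norml => /andP[h1 h2]; lra.
Qed.


Lemma pos_end (f : R -> R) (T0 c K : R) : {within `[0, T0], continuous f} ->
  0 < c -> c <= T0 -> 0 <= K ->
  (forall t, 0 <= t < c -> 0 < f t) ->
  (forall a b M, 0 <= a -> a <= b -> b <= c ->
     (forall r, a <= r <= b -> f r <= M) -> f a - K * (b - a) * M <= f b) ->
  0 < f c.
Proof.
move=> fc c0 cT K0 pos inc.
pose dl := 1 / (2 * K + 2).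
have dl0 : 0 < dl by rewrite /dl divr_gt0 //; lra.
have dlE : (2 * K + 2) * dl = 1 by rewrite /dl mulrC divfK //; lra.
have [a [a0 ac cad]] : exists a, [/\ 0 <= a, a < c & c - a <= dl].
  case: (ltP dl c) => h.
    by exists (c - dl); split; lra.
  by exists 0; split; lra.
have sub : `[a, c] `<=` `[0, T0].
  by apply: subset_itv; rewrite bnd_simp; lra.
have fc' := continuous_subspaceW sub fc.
have [tm tmin tmax] := EVT_max (ltW ac) fc'.
move: tmin; rewrite in_itv /= => /andP[atm tmc].
have fa : 0 < f a by apply: pos; rewrite a0 ac.
have Mpos : f a <= f tm by apply: tmax; rewrite in_itv /= lexx (ltW ac).
have := inc tm c (f tm) (le_trans a0 atm) tmc (lexx c).
have : forall r, tm <= r <= c -> f r <= f tm.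
  by move=> r /andP[h1 h2]; apply: tmax; rewrite in_itv /= h2 (le_trans atm h1).
move=> H /(_ H) hinc.
have h1 : K * (c - tm) <= K * dl by apply: ler_wpM2l => //; lra.
have h2 : 2 * (K * dl) <= 1 by nra.
have h3 : 0 <= K * (c - tm) by apply: mulr_ge0 => //; lra.
nra.
Qed.


Lemma pos_end_int (x : R -> R) (x0 T0 c K : R) (h : R -> R) :
  leb_integrable `[0, T0] h ->
  (forall t, 0 <= t <= T0 -> x t = x0 + leb_int `[0, t] h) ->
  0 < c -> c <= T0 -> 0 <= K -> (forall t, 0 <= t < c -> 0 < x t) ->
  (forall r M, 0 <= r <= c -> x r <= M -> - (K * M) <= h r) ->
  0 < x c.
Proof.
move=> hi hx c0 cT K0 pos hb.
apply: (pos_end (cont_of_int hi hx) c0 cT K0 pos).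
move=> a b M a0 ab bc hM.
have := incr_bound (m := - (K * M)) hi hx a0 ab (le_trans bc cT).
have -> : x a - K * (b - a) * M = x a + - (K * M) * (b - a) by ring.
apply => r /andP[ar rb]; apply: hb.
  by rewrite (le_trans a0 (ltW ar)) (le_trans rb bc).
by apply: hM; rewrite (ltW ar) rb.
Qed.

Lemma infl_bounds (b1 b2 uu ss ii jj nn : R) : 0 < b1 -> 0 < b2 ->
  0 <= ss -> 0 <= ii -> 0 <= jj -> ii <= nn -> jj <= nn -> 0 <= uu <= 1 ->
  0 <= ss / nn * (b1 * (1 - uu) * ii + b2 * jj) <= (b1 + b2) * ss.
Proof.
move=> hb1 hb2 hs hi hj hin hjn /andP[hu0 hu1].
have nn0 : 0 <= nn by exact: le_trans hi hin.
have L0 : 0 <= b1 * (1 - uu) * ii + b2 * jj.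
  apply: addr_ge0; apply: mulr_ge0 => //; try apply: mulr_ge0; lra.
have sn0 : 0 <= ss / nn by apply: divr_ge0.
apply/andP; split; first exact: mulr_ge0.
have [->|nnp] := eqVneq nn 0.
  by rewrite invr0 mulr0 mul0r; apply: mulr_ge0 => //; lra.
have nnp' : 0 < nn by rewrite lt_neqAle eq_sym nnp nn0.
have Ln : b1 * (1 - uu) * ii + b2 * jj <= (b1 + b2) * nn.
  have h1 : b1 * (1 - uu) * ii <= b1 * nn.
    rewrite -mulrA; apply: ler_wpM2l; first lra.
    apply: le_trans hin; rewrite -[leRHS]mul1r; apply: ler_wpM2r => //; lra.
  have h2 : b2 * jj <= b2 * nn by apply: ler_wpM2l => //; lra.
  lra.
apply: le_trans (ler_wpM2l sn0 Ln) _.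
rewrite le_eqVlt; apply/orP; left; apply/eqP.
by field; rewrite gt_eqF.
Qed.

Lemma clamp_max (A a3 um w : R) : 0 < a3 -> 0 <= um -> 0 <= w <= um ->
  (forall v, 0 <= v <= um -> A * v - 2^-1 * a3 * v ^+ 2 <= A * w - 2^-1 * a3 * w ^+ 2) ->
  w = Num.min (Num.max (A / a3) 0) um.
Proof.
move=> a30 um0 /andP[w0 wum] H.
have Ac : A = a3 * (A / a3) by rewrite mulrC divfK // gt_eqF.
set c := A / a3 in Ac *.
have sq0 : forall z : R, z ^+ 2 <= 0 -> z = 0.
  by move=> z hz; apply/eqP; rewrite -sqrf_eq0 eq_le hz sqr_ge0.
case: (ltP c 0) => hc.
  case: (leP 0 um) => h0; last lra.
  have := H 0; rewrite lexx um0 => /(_ isT).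
  rewrite Ac !expr2 !mulr0 subr0 => h; apply: sq0; rewrite expr2.
  have h1 : a3 * c * w <= 0.
    by rewrite -mulrA pmulr_rle0 // mulr_le0_ge0 // ltW.
  have k0 : 0 < 2^-1 :> R by rewrite invr_gt0.
  have h2 : (2^-1 * a3) * (w * w) <= 0 by rewrite -mulrA; lra.
  by rewrite pmulr_rle0 ?mulr_gt0 in h2.
case: (leP c um) => hcu.
  have := H c; rewrite hc hcu => /(_ isT).
  rewrite Ac !expr2 => h; apply/eqP; rewrite -subr_eq0; apply/eqP; apply: sq0.
  have k0 : 0 < 2^-1 :> R by rewrite invr_gt0.
  have e2 : 2^-1 + 2^-1 = 1 :> R by field.
  have h2 : (2^-1 * a3) * ((w - c) ^+ 2) <= 0.
    rewrite expr2.
    have -> : 2^-1 * a3 * ((w - c) * (w - c)) = - ((a3 * c * w - 2^-1 * a3 * (w * w)) - (a3 * c * c - 2^-1 * a3 * (c * c))) by field.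
    move: h; rewrite !mulrA; lra.
  by rewrite pmulr_rle0 ?mulr_gt0 in h2.
have := H um; rewrite um0 lexx => /(_ isT).
rewrite Ac => h.
apply/eqP; rewrite eq_le wum /=; rewrite leNgt; apply/negP => wl.
have E : a3 * c * w - 2^-1 * a3 * w ^+ 2 - (a3 * c * um - 2^-1 * a3 * um ^+ 2)
   = (um - w) * (2^-1 * a3 * (um + w) - a3 * c) by field.
have X0 : 0 <= (um - w) * (2^-1 * a3 * (um + w) - a3 * c) by rewrite -E; lra.
rewrite pmulr_rge0 in X0; last lra.
have h3 : a3 * w < a3 * um by rewrite ltr_pM2l.
have h4 : a3 * um < a3 * c by rewrite ltr_pM2l.
lra.
Qed.

Lemma within_min (A : set R) (f g : R -> R) :
  {within A, continuous f} -> {within A, continuous g} ->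
  {within A, continuous (fun t => Num.min (f t) (g t))}.
Proof. move=> cf cg x. exact: (@continuous_min R (subspace A) f g x (cf x) (cg x)). Qed.
Lemma within_max (A : set R) (f g : R -> R) :
  {within A, continuous f} -> {within A, continuous g} ->
  {within A, continuous (fun t => Num.max (f t) (g t))}.
Proof. move=> cf cg x. exact: (@continuous_max R (subspace A) f g x (cf x) (cg x)). Qed.
Lemma within_M (A : set R) (f g : R -> R) :
  {within A, continuous f} -> {within A, continuous g} ->
  {within A, continuous (fun t => f t * g t)}.
Proof. move=> cf cg x. exact: cvgM (cf x) (cg x). Qed.
Lemma within_B (A : set R) (f g : R -> R) :
  {within A, continuous f} -> {within A, continuous g} ->
  {within A, continuous (fun t => f t - g t)}.
Proof. move=> cf cg x. exact: cvgB (cf x) (cg x). Qed.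
Lemma within_cst (A : set R) (c : R) : {within A, continuous (fun _ : R => c)}.
Proof. by apply: continuous_subspaceT => x; exact: cst_continuous. Qed.
Lemma within_V (A : set R) (f : R -> R) :
  {within A, continuous f} -> (forall x, A x -> f x != 0) ->
  {within A, continuous (fun t => (f t)^-1)}.
Proof.
move=> cf nz; rewrite continuous_subspace_in => x; rewrite inE => Ax.
exact: cvgV (nz x Ax) (cf x).
Qed.
End G.

Unset Implicit Arguments.
Set Strict Implicit.

Theorem lemma7 (R : realType) (P : ocp_params R) (u s e i j n p1 p2 p3 p4 p5 : R -> R) :
  ocp_params_ok P ->
  optimal_ocp2 P u s e i j n ->
  is_adjoint P u s i j n p1 p2 p3 p4 p5 ->
  nontrivial_adjoint P p1 p2 p3 p4 p5 ->
  (forall t, 0 <= t <= TT P -> forall v, 0 <= v <= umax P ->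
     hamiltonian P (s t) (e t) (i t) (j t) (n t) (p1 t) (p2 t) (p3 t) (p4 t) (p5 t) v
     <= hamiltonian P (s t) (e t) (i t) (j t) (n t) (p1 t) (p2 t) (p3 t) (p4 t) (p5 t) (u t)) ->
  {within `[0, TT P], continuous u}.
Proof.
move=> [[b1 b2 g0 r1 r2] [[sg1 sg2 sg12 q01 um01] [[a1 a2 a3 T0p] [hs0 he0 hi0 hj0 hsum]]]].
move=> [[_ adm] [[[ifs ife ifi ifj ifn] tr] _]] [[ig1 ig2 ig3 ig4 ig5] ad] _ Hmax.
set T0 := TT P.
set fs := (fun r => - infl P (u r) (s r) (i r) (j r) (n r)) in ifs tr.
set fe := (fun r => infl P (u r) (s r) (i r) (j r) (n r) - gamma P * e r) in ife tr.
set fi := (fun r => sigma1 P * gamma P * e r - rho1 P * i r) in ifi tr.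
set fj := (fun r => sigma2 P * gamma P * e r - rho2 P * j r) in ifj tr.
set fn := (fun r => - (qq P * rho2 P * j r)) in ifn tr.
set g1 := (fun r => (beta1 P * (1 - u r) * i r + beta2 P * j r) / n r * (p1 r - p2 r)) in ig1 ad.
set g2 := (fun r => gamma P * (p2 r - sigma1 P * p3 r - sigma2 P * p4 r) + alpha2 P) in ig2 ad.
have trs : forall t, 0 <= t <= T0 -> s t = s0 P + leb_int `[0, t] fs by move=> t /tr [].
have tre : forall t, 0 <= t <= T0 -> e t = e0 P + leb_int `[0, t] fe by move=> t /tr [].
have tri : forall t, 0 <= t <= T0 -> i t = i0 P + leb_int `[0, t] fi by move=> t /tr [].
have trj : forall t, 0 <= t <= T0 -> j t = j0 P + leb_int `[0, t] fj by move=> t /tr [].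
have trn : forall t, 0 <= t <= T0 -> n t = 1 + leb_int `[0, t] fn by move=> t /tr [].
have ad1 : forall t, 0 <= t <= T0 -> p1 t = 0 - leb_int `[t, T0] g1 by move=> t /ad [].
have ad2 : forall t, 0 <= t <= T0 -> p2 t = - alpha1 P - leb_int `[t, T0] g2 by move=> t /ad [].
have cs := cont_of_int ifs trs.
have ce := cont_of_int ife tre.
have ci := cont_of_int ifi tri.
have cj := cont_of_int ifj trj.
have cn := cont_of_int ifn trn.
have cp1 := cont_of_int_back ig1 ad1.
have cp2 := cont_of_int_back ig2 ad2.
have T00 : 0 <= T0 by exact: ltW.
have in0 : (0:R) <= 0 <= T0 by rewrite lexx T00.
have s0E : s 0 = s0 P by rewrite trs // (int_pt ifs T00) addr0.
have e0E : e 0 = e0 P by rewrite tre // (int_pt ife T00) addr0.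
have i0E : i 0 = i0 P by rewrite tri // (int_pt ifi T00) addr0.
have j0E : j 0 = j0 P by rewrite trj // (int_pt ifj T00) addr0.
have Nle : forall r, 0 <= r <= T0 -> (forall t, 0 <= t <= r -> 0 <= i t /\ 0 <= j t) ->
    s r + e r + i r + j r <= n r.
  move=> r hr hij; have /andP[r0 rT] := hr.
  have mD : measurable (`[0, r]%classic : set (LebType R)) by exact: mitv.
  have sub : `[0, r]%classic `<=` `[0, T0]%classic by apply: subset_itv; rewrite bnd_simp.
  have I f : leb_integrable `[0, T0] f -> leb_integrable `[0, r] f.
    by move=> hf; apply: (int_sub (mitv _) mD sub hf).
  rewrite (trs r hr) (tre r hr) (tri r hr) (trj r hr) (trn r hr).
  have key : 0 <= leb_int `[0, r] (fun x => fn x - fs x - fe x - fi x - fj x).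
    apply: lint_ge0 => x; rewrite /= in_itv /= => hx.
    have [hi hj] := hij x hx.
    have -> : fn x - fs x - fe x - fi x - fj x = rho1 P * i x + (1 - qq P) * rho2 P * j x.
      rewrite /fn /fs /fe /fi /fj. have -> : sigma2 P = 1 - sigma1 P by rewrite -sg12 addrAC subrr add0r. ring.
    have q1 : 0 <= 1 - qq P by case/andP: q01 => _ ?; rewrite subr_ge0.
    apply: addr_ge0; [exact: mulr_ge0 (ltW r1) hi| exact: mulr_ge0 (mulr_ge0 q1 (ltW r2)) hj].
  have i1 := lintgB mD (I _ ifn) (I _ ifs).
  have i2 := lintgB mD i1 (I _ ife).
  have i3 := lintgB mD i2 (I _ ifi).
  rewrite (lintB mD i3 (I _ ifj)) (lintB mD i2 (I _ ifi)) (lintB mD i1 (I _ ife)) (lintB mD (I _ ifn) (I _ ifs)) in key.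
  clear -key hsum; lra.
pose g := fun t => Num.min (Num.min (s t) (e t)) (Num.min (i t) (j t)).
have cg : {within `[0, T0], continuous g} := within_min (within_min cs ce) (within_min ci cj).
have g0p : 0 < g 0 by rewrite /g s0E e0E i0E j0E !lt_min hs0 he0 hi0 hj0.
have um0 : 0 <= umax P by case/andP: um01.
have um1 : umax P <= 1 by case/andP: um01 => _ /ltW.
have gpos : forall t, 0 <= t <= T0 -> 0 < g t.
  move=> t ht; rewrite ltNge; apply/negP => gt.
  have [c [c0 cT gc posg]] := first_zero cg g0p (ex_intro _ t (conj ht gt)).
  have inT : forall r, 0 <= r <= c -> 0 <= r <= T0.
    by move=> r /andP[r0 rc]; rewrite r0 (le_trans rc cT).
  have nonneg : forall r, 0 <= r <= c -> [/\ 0 <= s r, 0 <= e r, 0 <= i r & 0 <= j r].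
    move=> r /andP[r0 rc].
    have : 0 <= g r.
      case: (ltP r c) => h; first by apply: ltW; apply: posg; rewrite r0 h.
      have -> : r = c by apply/eqP; rewrite eq_le rc h.
      by rewrite gc.
    by rewrite /g !le_min => /andP[/andP[-> ->] /andP[-> ->]].
  have Nc : forall r, 0 <= r <= c -> s r + e r + i r + j r <= n r.
    move=> r hr; apply: Nle; first exact: inT.
    move=> t' /andP[t0 tr']; have /andP[_ rc] := hr.
    have [_ _ ? ?] := nonneg t' ltac:(by rewrite t0 (le_trans tr' rc)).
    by split.
  have posf : forall t', 0 <= t' < c ->
      [/\ 0 < s t', 0 < e t', 0 < i t' & 0 < j t'].
    move=> t' ht'; have := posg t' ht'.
    by rewrite /g !lt_min => /andP[/andP[-> ->] /andP[-> ->]].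
  have ub : forall r, 0 <= r <= c -> 0 <= u r <= 1.
    move=> r hr; have /andP[u0 u1] := adm r (inT r hr).
    by rewrite u0 /= (le_trans u1 um1).
  have sc : 0 < s c.
    apply: (pos_end_int (K := beta1 P + beta2 P)) ifs trs c0 cT _ _ _.
    - exact: addr_ge0 (ltW b1) (ltW b2).
    - by move=> t' /posf [].
    move=> r M hr hM; have [hs he hi hj] := nonneg r hr; have hN := Nc r hr.
    have hin : i r <= n r by clear -hN hs he hj; lra.
    have hjn : j r <= n r by clear -hN hs he hi; lra.
    have := infl_bounds b1 b2 hs hi hj hin hjn (ub r hr).
    move=> /andP[_ hb].
    have : (beta1 P + beta2 P) * s r <= (beta1 P + beta2 P) * M.
      by apply: ler_wpM2l => //; apply: addr_ge0; exact: ltW.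
    move=> hk; rewrite /fs /infl; clear -hb hk; lra.
  have ec : 0 < e c.
    apply: (pos_end_int (K := gamma P)) ife tre c0 cT _ _ _.
    - exact: ltW g0.
    - by move=> t' /posf [].
    move=> r M hr hM; have [hs he hi hj] := nonneg r hr; have hN := Nc r hr.
    have hin : i r <= n r by clear -hN hs he hj; lra.
    have hjn : j r <= n r by clear -hN hs he hi; lra.
    have := infl_bounds b1 b2 hs hi hj hin hjn (ub r hr).
    move=> /andP[hb _].
    have : gamma P * e r <= gamma P * M by apply: ler_wpM2l => //; exact: ltW.
    move=> hk; rewrite /fe /infl; clear -hb hk; lra.
  have ic : 0 < i c.
    apply: (pos_end_int (K := rho1 P)) ifi tri c0 cT _ _ _.
    - exact: ltW r1.
    - by move=> t' /posf [].
    move=> r M hr hM; have [hs he hi hj] := nonneg r hr.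
    have : rho1 P * i r <= rho1 P * M by apply: ler_wpM2l => //; exact: ltW.
    have : 0 <= sigma1 P * gamma P * e r by apply: mulr_ge0 => //; apply: mulr_ge0; exact: ltW.
    move=> ha hb'; rewrite /fi; clear -ha hb'; lra.
  have jc : 0 < j c.
    apply: (pos_end_int (K := rho2 P)) ifj trj c0 cT _ _ _.
    - exact: ltW r2.
    - by move=> t' /posf [].
    move=> r M hr hM; have [hs he hi hj] := nonneg r hr.
    have : rho2 P * j r <= rho2 P * M by apply: ler_wpM2l => //; exact: ltW.
    have : 0 <= sigma2 P * gamma P * e r by apply: mulr_ge0 => //; apply: mulr_ge0; exact: ltW.
    move=> ha hb'; rewrite /fj; clear -ha hb'; lra.
  have : 0 < g c by rewrite /g !lt_min sc ec ic jc.
  by rewrite gc ltxx.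
have npos : forall t, 0 <= t <= T0 -> 0 < n t.
  move=> t ht; have := gpos t ht; rewrite /g !lt_min => /andP[/andP[hs he] /andP[hi hj]].
  suff : s t + e t + i t + j t <= n t by clear -hs he hi hj; lra.
  apply: (Nle t ht) => t' /andP[t0 tt]; have /andP[_ tT] := ht.
  have := gpos t' ltac:(by rewrite t0 (le_trans tt tT)).
  rewrite /g !lt_min => /andP[/andP[_ _] /andP[? ?]]; split; exact: ltW.
pose A t := s t / n t * beta1 P * i t * (p1 t - p2 t).
have uE : forall t, 0 <= t <= T0 -> u t = Num.min (Num.max (A t / alpha3 P) 0) (umax P).
  move=> t ht; apply: clamp_max => //; first exact: adm.
  move=> v hv; have := Hmax t ht v hv.
  have HE : forall w, hamiltonian P (s t) (e t) (i t) (j t) (n t) (p1 t) (p2 t) (p3 t) (p4 t) (p5 t) w =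
      hamiltonian P (s t) (e t) (i t) (j t) (n t) (p1 t) (p2 t) (p3 t) (p4 t) (p5 t) 0 +
      (A t * w - 2^-1 * alpha3 P * w ^+ 2).
    by move=> w; rewrite /hamiltonian /infl /A; ring.
  rewrite (HE v) (HE (u t)) => hh; clear -hh; lra.
have nz : forall x, `[0, T0]%classic x -> n x != 0.
  by move=> x; rewrite /= in_itv /= => hx; rewrite gt_eqF // npos.
have cA : {within `[0, T0], continuous (fun t => A t / alpha3 P)} :=
  within_M (within_M (within_M (within_M (within_M cs (within_V cn nz)) (@within_cst R _ _)) ci)
     (within_B cp1 cp2)) (@within_cst R _ _).
have cu : {within `[0, T0], continuous (fun t => Num.min (Num.max (A t / alpha3 P) 0) (umax P))} :=
  within_min (within_max cA (@within_cst R _ _)) (@within_cst R _ _).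
apply: (subspace_eq_continuous _ cu) => t; rewrite inE /= in_itv /= => ht.
exact: (esym (uE t ht)).
Qed.
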